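(* Let $p$ be a prime and $z\ge 2$ a real number. There is an algorithm which, given as input $p$, $z$, the table of the values $q_p(v)$ for all integers $v\in[0,p/z]$, the table of the values $v^{-1}\bmod p$ (least nonnegative residue) for all integers $v\in[1,p/z]$ with $\gcd(v,p)=1$, the table of the values $v^{-1}\bmod p^2$ (least nonnegative residue) for all integers $v\in[1,z]$ with $\gcd(v,p)=1$, and an integer $u$ with $0\le u<p-1$, computes $q_p(u)$ using $O(\log z)$ arithmetic operations on $O(\log p)$-bit integers.
   Context: For a prime $p$ and an integer $u$ with $\gcd(u,p)=1$, the Fermat quotient $q_p(u)$ is the unique integer with $q_p(u)\equiv (u^{p-1}-1)/p \pmod p$ and $0\le q_p(u)\le p-1$; also $q_p(kp)=0$ for all $k\in\mathbb{Z}$. *)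

(* Defs.v *)
(* A simple register-machine model of computation with
   oracle access to the three precomputed tables; each executed
   instruction counts as one operation. *)
From HB Require Import structures.
From mathcomp Require Import all_boot all_order all_algebra.
From mathcomp Require Import reals.
Set Implicit Arguments. Unset Strict Implicit. Unset Printing Implicit Defensive.
Import Order.TTheory GRing.Theory Num.Theory.
Local Open Scope ring_scope.

(* For p not dividing v,
   v^(p-1) - 1 is divisible by p, so the quotient is exact and we reduce
   it modulo p to get the unique representative in [0, p-1]. *)
Definition fq (p v : nat) : nat :=
  if (p %| v)%N then 0%N else (((v ^ p.-1 - 1) %/ p) %% p)%N.

Definition invmod (m v : nat) : nat :=
  odflt 0%N (omap val [pick w : 'I_m | ((v * w) %% m == 1 %% m)%N]).

Inductive aop := AAdd | ASub | AMul | ADiv | AMod.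
Inductive tbl := TQ | TInvP | TInvP2.

Inductive instr :=
| IConst (r : nat) (c : int)
| IArith (o : aop) (r a b : nat)        (* r := a o b *)
| ILook (t : tbl) (r a : nat)           (* r := table t at (reg a) *)
| IJlt (a b l : nat)                    (* if reg a < reg b goto l *)
| IJmp (l : nat)
| IHalt (r : nat).                      (* return reg r *)

Definition aop_eval (o : aop) (x y : int) : int :=
  match o with
  | AAdd => x + y | ASub => x - y | AMul => x * y
  | ADiv => (x %/ y)%Z | AMod => (x %% y)%Z
  end.

Definition state := (nat * (nat -> int))%type.

Inductive outcome := Next of state | Done of int | Stuck.

Definition upd (f : nat -> int) (r : nat) (v : int) : nat -> int :=
  fun i => if i == r then v else f i.

(* One step of program P with tables T; an arithmetic result of absolute
   value larger than B makes the machine fail (bit-size restriction). *)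
Definition step (P : seq instr) (T : tbl -> int -> int) (B : int) (s : state)
  : outcome :=
  let: (pc, g) := s in
  if (pc < size P)%N then
    match nth (IHalt 0) P pc with
    | IConst r c => Next (pc.+1, upd g r c)
    | IArith o r a b =>
        let v := aop_eval o (g a) (g b) in
        if `|v| <= B then Next (pc.+1, upd g r v) else Stuck
    | ILook t r a => Next (pc.+1, upd g r (T t (g a)))
    | IJlt a b l => if g a < g b then Next (l, g) else Next (pc.+1, g)
    | IJmp l => Next (l, g)
    | IHalt r => Done (g r)
    end
  else Stuck.

Fixpoint run (P : seq instr) (T : tbl -> int -> int) (B : int) (n : nat)
  (s : state) : outcome :=
  match n with
  | 0%N => Next s
  | n'.+1 => match step P T B s with
             | Next s' => run P T B n' s'
             | o => o
             end
  end.

(* The input tables, as oracles (value 0 outside their domain). *)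
Definition tables {R : realType} (p : nat) (z : R) (t : tbl) (a : int) : int :=
  match t with
  | TQ => if (0 <= a) && (a%:~R <= p%:R / z) then (fq p `|a|%N)%:Z else 0
  | TInvP => if (1 <= a) && (a%:~R <= p%:R / z) && coprime `|a|%N p
             then (invmod p `|a|%N)%:Z else 0
  | TInvP2 => if (1 <= a) && (a%:~R <= z) && coprime `|a|%N p
              then (invmod (p ^ 2) `|a|%N)%:Z else 0
  end.

Definition init {R : realType} (p : nat) (z : R) (u : nat) : nat -> int :=
  fun i => if i == 0%N then p%:Z else if i == 1%N then Num.floor z
           else if i == 2%N then Num.floor (p%:R / z)
           else if i == 3%N then u%:Z else 0.

(* Main.v *)
Require Import Defs.
From HB Require Import structures.
From mathcomp Require Import all_boot all_order all_algebra all_fingroup all_solvable.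
From mathcomp Require Import reals.
From mathcomp Require Import zify ring lra.
Set Implicit Arguments. Unset Strict Implicit. Unset Printing Implicit Defensive.
Import Order.TTheory GRing.Theory Num.Theory.
Local Open Scope ring_scope.

Lemma M2core (P qu qs qw k1 k2 k3 t A X iw c U S W Bn Wd : int) :
  U = 1 + P*qu + P^+2*k1 -> S = 1 + P*qs + P^+2*k2 -> W = 1 + P*qw + P^+2*k3 ->
  Bn = W + (P - 1) * A * P * t + P^+2 * X -> U * S = Bn -> Wd * iw = 1 + P * c ->
  W = Wd * A -> P != 0 -> exists Y, qw - t*iw - qs = qu + P * Y.
Proof.
move=> hU hS hW hB hUS hinv hWA hP.
set stuff := qu * qs + k1 + k2 + P*(qu * k2 + qs * k1) + P^+2 * k1 * k2 - k3 - t*A - X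
   + t*(qw * iw + P * k3 * iw - c * A).
exists stuff.
have hA : A = W * iw - P * c * A.
  have -> : W * iw - P * c * A = A * (Wd * iw - P * c) by rewrite hWA; ring.
  by rewrite hinv; ring.
have E : U * S - Bn = 0 by rewrite hUS subrr.
rewrite hU hS hB hW in E.
have h2 : A - ((1 + P * qw + P ^+ 2 * k3) * iw - P * c * A) = 0.
  by rewrite {1}hA hW subrr.
have key : P * ((qw - t * iw - qs) - (qu + P * stuff)) = 0.
  have -> : P * ((qw - t * iw - qs) - (qu + P * stuff)) =
     - ((1 + P * qu + P ^+ 2 * k1) * (1 + P * qs + P ^+ 2 * k2) -
       (1 + P * qw + P ^+ 2 * k3 + (P - 1) * A * P * t + P ^+ 2 * X))
     + P * t * (A - ((1 + P * qw + P ^+ 2 * k3) * iw - P * c * A)).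
    rewrite /stuff; ring.
  by rewrite E h2; ring.
apply/eqP; rewrite -subr_eq0; apply/eqP.
by move/eqP: key; rewrite mulf_eq0 (negbTE hP) => /eqP.
Qed.

Lemma PoszX' (m n : nat) : Posz (m ^ n)%N = (Posz m) ^+ n.
Proof. elim: n => [|n IH] //; by rewrite expnS exprS PoszM IH. Qed.

Section NT.
Variable p : nat.
Hypothesis hp : prime p.
Lemma p_gt1 : (1 < p)%N. Proof. exact: prime_gt1. Qed.

Lemma fermat1 a : ~~ (p %| a)%N -> (a ^ p.-1 %% p = 1)%N.
Proof.
move=> h. have hc : coprime a p by rewrite coprime_sym prime_coprime.
have := Euler_exp_totient hc. rewrite totient_prime // => ->.
by rewrite modn_small // p_gt1.
Qed.

Lemma fq_lt a : (fq p a < p)%N.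
Proof. rewrite /fq; case: ifP => _; [exact: prime_gt0 | by rewrite ltn_pmod // prime_gt0]. Qed.

Lemma fq_nat a : ~~ (p %| a)%N ->
  exists m, (a ^ p.-1 = 1 + p * (fq p a) + (p * p) * m)%N.
Proof.
move=> h. have f := fermat1 h. rewrite /fq (negbTE h).
have ha : (0 < a)%N by rewrite lt0n; apply/negP=> /eqP a0; rewrite a0 dvdn0 in h.
have hpos : (0 < a ^ p.-1)%N by rewrite expn_gt0 ha.
have hd : (p %| a ^ p.-1 - 1)%N.
  by rewrite -eqn_mod_dvd // f modn_small // p_gt1.
set m := ((a ^ p.-1 - 1) %/ p)%N.
have em : (a ^ p.-1 = 1 + p * m)%N by rewrite /m mulnC divnK //; lia.
exists (m %/ p)%N. rewrite em {1}(divn_eq m p). ring.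
Qed.

Lemma fq_int a : ~~ (p %| a)%N ->
  exists k : int, (a ^ p.-1)%N%:Z = 1 + p%:Z * (fq p a)%:Z + (p%:Z)^+2 * k.
Proof.
move=> /fq_nat [m ->]. exists m%:Z. rewrite !PoszD !PoszM /=. ring.
Qed.

Lemma invmod_spec w : ~~ (p %| w)%N -> ((w * invmod p w) %% p = 1)%N /\ (invmod p w < p)%N.
Proof.
move=> h. rewrite /invmod. case: pickP => [x /eqP hx | hn] /=.
  by rewrite hx modn_small ?p_gt1 // ltn_ord.
exfalso. have hlt : (w ^ p.-2 %% p < p)%N by rewrite ltn_pmod // prime_gt0.
move: (hn (Ordinal hlt)) => /=. rewrite modnMmr -expnS prednK; last by have := p_gt1; lia.
by rewrite fermat1 // modn_small ?p_gt1 // eqxx.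
Qed.

Lemma binom1 (w t P : int) n : exists X, (w + P*t)^+n.+1 = w^+n.+1 + n.+1%:R * w^+n * P * t + P^+2 * X.
Proof.
elim: n => [|n [X IH]]. by exists 0; rewrite expr1 expr0; ring.
exists ((w + P * t) * X + n.+1%:R * w ^+ n * t^+2).
rewrite exprS IH !exprS. rewrite -[n.+2]addn1 -[n.+1]addn1 !natrD. ring.
Qed.

Lemma M1 (res u : nat) : (0 < u < p)%N -> (res < p * p)%N -> res = u ^ p.-1 %[mod p * p] ->
  ((res%:Z - 1) %/ p)%Z = (fq p u)%:Z.
Proof.
move=> hu hr hm. have hnd : ~~ (p %| u)%N.
  by apply/negP => /dvdn_leq; lia.
have [m em] := fq_nat hnd. have hf := fq_lt u.
have hres : res = (1 + p * fq p u)%N.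
  rewrite -(modn_small hr) hm em [(1 + _ + _)%N]addnC mulnC modnMDl modn_small //. nia.
rewrite hres PoszD addrC addKr PoszM mulKz //. have := p_gt1. lia.
Qed.

Lemma M2 (u w : nat) (s : int) : (2 < p)%N -> (0 < u < p)%N -> (0 < w < p)%N -> s != 0 ->
  `|s| < p%:Z -> (p%:Z %| u%:Z * s - w%:Z)%Z ->
  (fq p u)%:Z = (((fq p w)%:Z - ((u%:Z * s - w%:Z) %/ p%:Z)%Z * (invmod p w)%:Z
                  - (fq p `|s|%N)%:Z) %% p%:Z)%Z.
Proof.
move=> hp2 hu hw hs0 hsp hdv.
set P := p%:Z. set t := ((u%:Z * s - w%:Z) %/ P)%Z.
have ht : u%:Z * s = w%:Z + P * t by have := divzK hdv; rewrite -/P -/t => h; rewrite (mulrC P) h; ring.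
have nd x : (0 < x < p)%N -> ~~ (p %| x)%N by move=> hx; apply/negP => /dvdn_leq; lia.
have hsn : (0 < `|s|%N < p)%N.
  apply/andP; split; first by rewrite absz_gt0.
  by move: hsp; rewrite -abszE; lia.
have [k1 hU] := fq_int (nd _ hu).
have [k2 hS] := fq_int (nd _ hsn).
have [k3 hW] := fq_int (nd _ hw).
have [hinv hiw] := invmod_spec (nd _ hw).
have [X hB] := binom1 w%:Z t P p.-2.
have e1 : p.-2.+1 = p.-1 by clear -hp2; lia.
rewrite e1 in hB.
have hPm1 : (p.-1)%:R = P - 1 :> int by rewrite /P; clear -hp2; lia.
rewrite hPm1 in hB.
have hodd : ~~ odd p.-1.
  have : odd p by case: (even_prime hp) => //; clear -hp2; lia.
  by case: (p) => //= n; rewrite negbK.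
have hSs : (`|s|%N ^ p.-1)%N%:Z = s ^+ p.-1.
  rewrite PoszX' abszE. case: (ltrP s 0) => hs.
    by rewrite ltr0_norm // exprNn -signr_odd (negbTE hodd) mul1r.
  by rewrite ger0_norm.
rewrite !PoszX' in hU hW; rewrite hSs in hS.
have hUS : (u%:Z) ^+ p.-1 * s ^+ p.-1 = (w%:Z + P * t) ^+ p.-1 by rewrite -exprMn ht.
have hinv' : w%:Z * (invmod p w)%:Z = 1 + P * ((w * invmod p w) %/ p)%N%:Z.
  rewrite -PoszM {1}(divn_eq (w * invmod p w) p) hinv PoszD PoszM /P; ring.
have hWA : (w%:Z) ^+ p.-1 = w%:Z * (w%:Z) ^+ p.-2 by rewrite -exprS e1.
have hP0 : P != 0 by rewrite /P; clear -hp2; lia.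
have [Y hY] := M2core hU hS hW hB hUS hinv' hWA hP0.
rewrite hY addrC mulrC modzMDl modz_small //. have := fq_lt u; clear; lia.
Qed.
End NT.

Definition EInv (p : nat) (N u : int) (j : nat) (rp rc sp sc : int) :=
  0 < rc /\ rc < rp /\ rp <= p%:Z /\ (p%:Z %| u * sp - rp)%Z /\ (p%:Z %| u * sc - rc)%Z /\
  rp * `|sc| + rc * `|sp| = p%:Z /\ sc != 0 /\ sp * sc <= 0 /\ `|sp| <= `|sc| /\ `|sc| <= N /\
  (2 ^ j)%N%:Z <= (`|sp| + `|sc|) ^+ 2.

Definition EFin (p : nat) (N u : int) (w sc : int) :=
  0 < w /\ w * (N + 1) <= p%:Z /\ sc != 0 /\ `|sc| <= N /\ (p%:Z %| u * sc - w)%Z.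

Lemma abs_sub_opp (x y a : int) : x * y <= 0 -> 0 < a -> y != 0 ->
  `|x - a * y| = `|x| + a * `|y| /\ y * (x - a * y) < 0.
Proof.
move=> hxy ha hy. case: (ltrP 0 y) => hy0.
  have hx : x <= 0 by rewrite -(pmulr_rle0 _ hy0) mulrC.
  split; nia.
have hy1 : y < 0 by rewrite lt_neqAle hy0 hy.
have hx : 0 <= x by rewrite -(nmulr_rle0 _ hy1) mulrC.
split; nia.
Qed.

Section EM.
Variables (p : nat) (N u : int) (j : nat) (rp rc sp sc : int).
Hypothesis hp : prime p.
Hypothesis hNp : N < p%:Z.
Hypothesis hI : EInv p N u j rp rc sp sc.
Let a := (rp %/ rc)%Z.
Let sn := sp - a * sc.
Let rn := rp - a * rc.

Lemma em_rn : rn = (rp %% rc)%Z /\ 0 <= rn < rc.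
Proof.
move: hI => [h1 [h2 _]].
have e : rn = (rp %% rc)%Z by rewrite /rn /a {1}(divz_eq rp rc); ring.
split => //. rewrite e modz_ge0 ?ltz_pmod //; lia.
Qed.

Lemma em_a : 1 <= a.
Proof.
move: hI => [h1 [h2 _]]. have [e1 e2] := em_rn.
have : a * rc = rp - rn by rewrite /rn; ring.
nia.
Qed.

Lemma em_sn : `|sn| = `|sp| + a * `|sc| /\ sc * sn < 0.
Proof.
move: hI => [_ [_ [_ [_ [_ [_ [h7 [h8 _]]]]]]]].
apply: abs_sub_opp => //. have := em_a; lia.
Qed.

Lemma em_exit : N < `|sn| -> EFin p N u rc sc.
Proof.
move: (hI) => [h1 [h2 [h3 [h4 [h5 [h6 [h7 [h8 [h9 [h10 h11]]]]]]]]]] hN.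
have [e1 e2] := em_rn. have [s1 s2] := em_sn.
split => //; split => //.
have h : rc * `|sn| <= p%:Z.
  rewrite s1 -h6 mulrDr. 
  have h' : a * rc <= rp by move: e2; rewrite /rn; lia.
  have : rc * (a * `|sc|) <= rp * `|sc| by rewrite mulrA (mulrC rc) ler_wpM2r.
  lia.
have hrc : 0 <= rc by lia.
apply: le_trans h. rewrite ler_pM2l //. lia.
Qed.

Lemma em_cont : `|sn| <= N -> EInv p N u j.+1 rc rn sc sn.
Proof.
move: (hI) => [h1 [h2 [h3 [h4 [h5 [h6 [h7 [h8 [h9 [h10 h11]]]]]]]]]] hN.
have [e1 e2] := em_rn. have [s1 s2] := em_sn. have ha := em_a.
have hid : rc * `|sn| + rn * `|sc| = p%:Z.
  by rewrite s1 -h6 /rn; ring.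
have hsn0 : sn != 0 by apply/eqP => e; move: s2; rewrite e mulr0 ltxx.
have hrn : 0 < rn.
  rewrite lt_neqAle (andP e2).1 andbT; apply/eqP => e.
  rewrite -e mul0r addr0 in hid.
  have hd : (`|sn|%N %| p)%N.
    apply/dvdnP; exists `|rc|%N. have := congr1 absz hid; rewrite abszM /= => <-.
    by congr (_ * _)%N.
  case/primeP: hp => _ /(_ _ hd) /orP [] /eqP e'.
    have : `|sn| = 1 by rewrite -abszE e'.
    move=> e1'. rewrite e1' mulr1 in hid. clear -hid h2 h3. lia.
  have : `|sn| = p%:Z by rewrite -abszE e'.
  clear -hN hNp. lia.
have hsc : `|sc| <= a * `|sc| by rewrite ler_peMl.
split; first done. split; first by case/andP: e2.
split; first by apply: le_trans h3; apply: ltW.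
split; first done.
split.
  apply/dvdzP. move/dvdzP: h4 => [k1 hk1]. move/dvdzP: h5 => [k2 hk2].
  exists (k1 - a * k2). rewrite /sn /rn.
  have -> : u * (sp - a * sc) - (rp - a * rc) = (u * sp - rp) - a * (u * sc - rc) by ring.
  rewrite hk1 hk2; ring.
split; first done. split; first done.
split; first by rewrite ltW.
split; first by rewrite s1; clear -hsc; lia.
split; first done.
rewrite expnS PoszM s1.
have hx : 0 <= `|sp| by []. have hy : 0 <= `|sc| by [].
have h2' : (`|sp| + `|sc|)^+2 * 2 <= (`|sc| + (`|sp| + a * `|sc|))^+2.
  have : `|sp| + 2 * `|sc| <= `|sc| + (`|sp| + a * `|sc|) by clear -hsc; lia.
  move=> hle. apply: le_trans (_ : (`|sp| + 2 * `|sc|)^+2 <= _).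
    clear -hx hy h9; nia.
  clear -hx hy hle. nia.
clear -h11 h2'. nia.
Qed.
End EM.

Section Real.
Variables (R : realType) (p : nat) (z : R).
Hypothesis hp : (1 < p)%N.
Hypothesis hz : 2 <= z.
Let N := Num.floor z.
Let K := Num.floor (p%:R / z).

Lemma z_gt0 : 0 < z. Proof. have := hz; lra. Qed.
Lemma N_ge2 : 2 <= N.
Proof. by rewrite /N floor_ge_int. Qed.
Lemma K_ge0 : 0 <= K.
Proof. rewrite /K floor_ge0 divr_ge0 //; last (have := hz; lra). Qed.
Lemma K_ltp : K < p%:Z.
Proof.
rewrite /K floor_lt_int ltr_pdivrMr ?z_gt0 //.
have hp0 : 0 < p%:R :> R by rewrite ltr0n; lia.
rewrite -[_%:~R]/(p%:R). have := hz; nra.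
Qed.
Lemma le_K a : a <= K -> a%:~R <= p%:R / z.
Proof. move=> h; apply: le_trans (floor_le _); by rewrite ler_int. Qed.
Lemma w_small (w : int) : 0 <= w -> w * (N + 1) <= p%:Z -> w%:~R <= p%:R / z.
Proof.
move=> w0 hw. rewrite ler_pdivlMr ?z_gt0 //.
have h1 : z < (N + 1)%:~R by apply: floorD1_gt.
have h2 : (w * (N+1))%:~R <= p%:Z%:~R :> R by rewrite ler_int.
rewrite rmorphM /= in h2. have h3 : 0 <= w%:~R :> R by rewrite ler0z.
rewrite -[p%:Z%:~R]/(p%:R) in h2 *. nra.
Qed.
Lemma exp_big : K < N -> p%:Z < N * (N + 1).
Proof.
move=> h. have : p%:R / z < N%:~R by rewrite -floor_lt_int.
rewrite ltr_pdivrMr ?z_gt0 // => h1.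
have h2 : z < (N + 1)%:~R by apply: floorD1_gt.
have hN : 0 <= N%:~R :> R by rewrite ler0z; have := N_ge2; lia.
rewrite -(ltr_int R) rmorphM /=. rewrite -[p%:Z%:~R]/(p%:R). nra.
Qed.
End Real.

Definition Prog : seq instr := [::
 IConst 9 0; IConst 10 1; IConst 11 2; IJlt 3 10 36; IJlt 2 1 37;
 IArith ASub 12 9 1; IArith AAdd 4 0 9; IArith AAdd 5 3 9; IConst 6 0; IConst 7 1;
 (*10*) IArith ADiv 13 4 5; IArith AMul 14 13 7; IArith ASub 14 6 14; IJlt 1 14 22; IJlt 14 12 22;
 (*15*) IArith AMul 15 13 5; IArith ASub 15 4 15; IArith AAdd 4 5 9; IArith AAdd 5 15 9; IArith AAdd 6 7 9;
 (*20*) IArith AAdd 7 14 9; IJmp 10;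
 (*22*) IArith AAdd 16 7 9; IJlt 9 7 25; IArith ASub 16 9 7;
 (*25*) ILook TQ 17 5; ILook TInvP 18 5; ILook TQ 19 16; IArith AMul 20 3 7; IArith ASub 20 20 5;
 (*30*) IArith ADiv 20 20 0; IArith AMul 20 20 18; IArith ASub 21 17 20; IArith ASub 21 21 19; IArith AMod 21 21 0;
 (*35*) IHalt 21; IHalt 9;
 (*37*) IArith AMul 22 0 0; IConst 23 1; IArith AAdd 24 3 9; IArith ASub 25 0 10;
 (*41*) IJlt 9 25 43; IJmp 51; IArith AMod 26 25 11; IJlt 26 10 47; IArith AMul 23 23 24;
 (*46*) IArith AMod 23 23 22; IArith AMul 24 24 24; IArith AMod 24 24 22; IArith ADiv 25 25 11; IJmp 41;
 (*51*) IArith ASub 23 23 10; IArith ADiv 23 23 0; IHalt 23].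


Section M.
Variables (T : tbl -> int -> int) (B : int).
Notation run := (run Prog T B).
Notation step := (step Prog T B).
Definition reach k s s' := run k s = Next s'.

Lemma reach0 s : reach 0 s s. Proof. by []. Qed.
Lemma reach_stepL k s s1 s2 : step s = Next s1 -> reach k s1 s2 -> reach k.+1 s s2.
Proof. by rewrite /reach /= => ->. Qed.
Lemma run_cat n m s : run (n + m) s = match run n s with Next s' => run m s' | o => o end.
Proof. elim: n s => [|n IH] s //=. case: (step s) => //. Qed.
Lemma reach_trans k1 k2 s s1 s2 : reach k1 s s1 -> reach k2 s1 s2 -> reach (k1 + k2) s s2.
Proof. by rewrite /reach run_cat => ->. Qed.
Lemma reach_done k s s1 v : reach k s s1 -> step s1 = Done v -> run k.+1 s = Done v.
Proof. by rewrite /reach -addn1 run_cat => -> /=; rewrite /= => ->. Qed.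

Lemma st_arith pc g o r a b : nth (IHalt 0) Prog pc = IArith o r a b -> (pc < size Prog)%N ->
  `|aop_eval o (g a) (g b)| <= B -> step (pc, g) = Next (pc.+1, upd g r (aop_eval o (g a) (g b))).
Proof. by move=> h1 h2 h3; rewrite /= h2 h1 h3. Qed.
Lemma st_const pc g r c : nth (IHalt 0) Prog pc = IConst r c -> (pc < size Prog)%N ->
  step (pc, g) = Next (pc.+1, upd g r c).
Proof. by move=> h1 h2; rewrite /= h2 h1. Qed.
Lemma st_look pc g t r a : nth (IHalt 0) Prog pc = ILook t r a -> (pc < size Prog)%N ->
  step (pc, g) = Next (pc.+1, upd g r (T t (g a))).
Proof. by move=> h1 h2; rewrite /= h2 h1. Qed.
Lemma st_jt pc g a b l : nth (IHalt 0) Prog pc = IJlt a b l -> (pc < size Prog)%N ->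
  g a < g b -> step (pc, g) = Next (l, g).
Proof. by move=> h1 h2 h3; rewrite /= h2 h1 h3. Qed.
Lemma st_jf pc g a b l : nth (IHalt 0) Prog pc = IJlt a b l -> (pc < size Prog)%N ->
  g b <= g a -> step (pc, g) = Next (pc.+1, g).
Proof. by move=> h1 h2 h3; rewrite /= h2 h1 ltNge h3. Qed.
Lemma st_jmp pc g l : nth (IHalt 0) Prog pc = IJmp l -> (pc < size Prog)%N ->
  step (pc, g) = Next (l, g).
Proof. by move=> h1 h2; rewrite /= h2 h1. Qed.
Lemma st_halt pc g r : nth (IHalt 0) Prog pc = IHalt r -> (pc < size Prog)%N ->
  step (pc, g) = Done (g r).
Proof. by move=> h1 h2; rewrite /= h2 h1. Qed.
End M.

Ltac sA := eapply reach_stepL; [apply: st_arith => //=; rewrite /upd /= |].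
Ltac sC := eapply reach_stepL; [apply: st_const => //= |].
Ltac sL := eapply reach_stepL; [apply: st_look => //= |].
Ltac sT := eapply reach_stepL; [apply: st_jt => //=; rewrite /upd /= |].
Ltac sF := eapply reach_stepL; [apply: st_jf => //=; rewrite /upd /= |].
Ltac sJ := eapply reach_stepL; [apply: st_jmp => //= |].

Section Exp.
Variables (p u : nat) (T : tbl -> int -> int).
Hypothesis hp : prime p.
Let B := (p ^ 100)%N%:Z.

Lemma bnd (x : int) : `|x| <= (p * p*(p * p))%N%:Z -> `|x| <= B.
Proof.
move=> h; apply: le_trans h _. rewrite /B lez_nat.
have -> : (p * p * (p * p) = p ^ 4)%N by rewrite !expnS expn0; ring.
by rewrite leq_pexp2l // prime_gt0.
Qed.

Lemma exp_loop e : forall (res bs : nat) g,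
  g 0%N = p%:Z -> g 9%N = 0 -> g 10%N = 1 -> g 11%N = 2 -> g 22%N = (p * p)%N%:Z ->
  g 23%N = res%:Z -> g 24%N = bs%:Z -> g 25%N = e%:Z ->
  (res < p * p)%N -> (bs < p * p)%N -> (e < p)%N -> (res * bs ^ e = u ^ p.-1 %[mod p * p])%N ->
  exists i k res' g', (k <= 9*i+2)%N /\ (2^i <= maxn 1 (2*e))%N /\ reach T B k (41%N, g) (51%N, g') /\
    g' 0%N = p%:Z /\ g' 10%N = 1 /\ g' 23%N = res'%:Z /\ (res' < p * p)%N /\ (res' = u ^ p.-1 %[mod p * p])%N.
Proof.
elim/ltn_ind: e => e IH res bs g h0 h9 h10 h11 h22 h23 h24 h25 hr hb he hm.
case: (posnP e) => [e0 | epos].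
  exists 0%N, 2%N, res, g. split => //. split; first by rewrite e0.
  split; last by move: hm; rewrite e0 expn0 muln1.
  sF; first by rewrite h25 h9 e0.
  sJ. exact: reach0.
have hpp : (0 < p * p)%N by rewrite muln_gt0 prime_gt0.
have hbnd (a b : nat) : (a < p * p)%N -> (b < p * p)%N -> `|a%:Z * b%:Z| <= B.
  move=> ha hb'; apply: bnd. rewrite -PoszM ger0_norm // lez_nat. 
  by apply: leq_mul; apply: ltnW.
have hmodb (x : int) : `|(x %% (p * p)%N%:Z)%Z| <= B.
  apply: bnd. have := modz_ge0 x (_ : (p * p)%N%:Z != 0); have := ltz_pmod x (_ : 0 < (p * p)%N%:Z).
  clear -hpp. nia.
have he2 : `|(e%:Z %/ 2)%Z| <= B by apply: bnd; clear -he hpp; nia.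
have [g1 [hr1 [h0' [h9' [h10' [h11' [h22' [h23' [h24' h25']]]]]]]]] :
  exists g1, reach T B (if odd e then 9 else 7)%N (41%N, g) (41%N, g1) /\ g1 0%N = p%:Z /\ g1 9%N = 0 /\
    g1 10%N = 1 /\ g1 11%N = 2 /\ g1 22%N = (p * p)%N%:Z /\
    g1 23%N = (if odd e then ((res*bs) %% (p * p))%N else res)%:Z /\
    g1 24%N = ((bs*bs) %% (p * p))%N%:Z /\ g1 25%N = (e %/ 2)%N%:Z.
  case: (boolP (odd e)) => ho.
    have h2 : (e %% 2 = 1)%N by rewrite modn2 ho.
    eexists; split.
      sT; first by rewrite h9 h25; clear -epos; lia.
      sA; first by apply: bnd; rewrite h25 h11; clear -hpp; nia.
      sF; first by rewrite h10 h25 h11; clear -h2; lia.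
      sA; first by rewrite h23 h24; apply: hbnd.
      sA; first by rewrite h22; apply: hmodb.
      sA; first by rewrite h24; apply: hbnd.
      sA; first by rewrite h22; apply: hmodb.
      sA; first by rewrite h25 h11.
      sJ. exact: reach0.
    rewrite /upd /= h0 h9 h10 h11 h22 h23 h24 h25.
    do 7?split => //.
    - by rewrite -modz_nat PoszM.
    - by rewrite -modz_nat PoszM.
    - clear; lia.
  have h2 : (e %% 2 = 0)%N by rewrite modn2 (negPf ho).
  eexists; split.
    sT; first by rewrite h9 h25; clear -epos; lia.
    sA; first by apply: bnd; rewrite h25 h11; clear -hpp; nia.
    sT; first by rewrite h10 h25 h11; clear -h2; lia.
    sA; first by rewrite h24; apply: hbnd.
    sA; first by rewrite h22; apply: hmodb.
    sA; first by rewrite h25 h11.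
    sJ. exact: reach0.
  rewrite /upd /= h0 h9 h10 h11 h22 h23 h24 h25.
  do 7?split => //.
  - by rewrite -modz_nat PoszM.
  - clear; lia.
set res1 := (if odd e then ((res * bs) %% (p * p))%N else res).
have hlt : (e %/ 2 < e)%N by rewrite ltn_Pdiv.
have eb : (bs ^ e = bs ^ (e %% 2) * (bs * bs) ^ (e %/ 2))%N.
  rewrite expnMn -expnD -expnD; congr (bs ^ _)%N. rewrite {1}(divn_eq e 2); clear; lia.
have hm1 : (res1 * ((bs * bs) %% (p * p)) ^ (e %/ 2) = u ^ p.-1 %[mod p * p])%N.
  rewrite -hm eb /res1 -modnMmr modnXm modnMmr.
  case: (boolP (odd e)) => ho.
    rewrite modnMml. have -> : (e %% 2 = 1)%N by rewrite modn2 ho.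
    by rewrite expn1 mulnA.
  have -> : (e %% 2 = 0)%N by rewrite modn2 (negPf ho).
  by rewrite expn0 mul1n.
have hr1' : (res1 < p * p)%N by rewrite /res1; case: (odd e) => //; rewrite ltn_pmod.
have [i [k [res' [g' [hk [hi [hre [h0'' [h10'' [h23'' [hr'' hm'']]]]]]]]]]] :=
  IH _ hlt res1 ((bs * bs) %% (p * p))%N g1 h0' h9' h10' h11' h22' h23' h24' h25' hr1'
   (ltn_pmod _ hpp) (leq_ltn_trans (leq_div _ _) he) hm1.
exists i.+1, ((if odd e then 9 else 7) + k)%N, res', g'.
split; first by case: (odd e); clear -hk; lia.
split; first by rewrite expnS; clear -hi epos; lia.
split; first exact: reach_trans hr1 hre.
done.
Qed.
End Exp.

Section Euc.
Variables (p u : nat) (N : int) (T : tbl -> int -> int).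
Hypothesis hp : prime p.
Hypothesis hNp : N < p%:Z.
Hypothesis hN2 : 2 <= N.
Let B := (p ^ 100)%N%:Z.

Lemma bndpp (x : int) : `|x| <= p%:Z * p%:Z -> `|x| <= B.
Proof.
move=> h; apply: bnd => //. have hp1 : (1 <= p)%N by apply: prime_gt0.
apply: le_trans h _. rewrite -PoszM lez_nat. by rewrite leq_pmulr // muln_gt0 hp1.
Qed.
Lemma bndp (x : int) : `|x| <= p%:Z -> `|x| <= B.
Proof.
move=> h; apply: bndpp. apply: le_trans h _. have hp1 : (1 <= p)%N by apply: prime_gt0.
rewrite -PoszM lez_nat. by rewrite leq_pmulr.
Qed.

Lemma bnd3 (x : int) : `|x| <= p%:Z * p%:Z * p%:Z -> `|x| <= B.
Proof.
move=> h; apply: bnd => //. have hp1 : (1 <= p)%N by apply: prime_gt0.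
apply: le_trans h _. rewrite -!PoszM lez_nat. by rewrite leq_mul2l leq_pmulr ?orbT.
Qed.

Lemma euclid_loop m : forall j g, (`|g 5%N|%N < m)%N ->
  g 0%N = p%:Z -> g 1%N = N -> g 3%N = u%:Z -> g 9%N = 0 -> g 12%N = - N ->
  EInv p N u%:Z j (g 4%N) (g 5%N) (g 6%N) (g 7%N) ->
  exists i k g', (k <= 12 * i + 5)%N /\ reach T B k (10%N, g) (22%N, g') /\
    g' 0%N = p%:Z /\ g' 3%N = u%:Z /\ g' 9%N = 0 /\ EFin p N u%:Z (g' 5%N) (g' 7%N) /\
    (2 ^ (j + i))%N%:Z <= 4 * N ^+ 2.
Proof.
elim: m => [|m IH] j g hm h0 h1 h3 h9 h12 hI //.
move: (hI) => [h1' [h2' [h3' [h4' [h5' [h6' [h7' [h8' [h9' [h10' h11']]]]]]]]]].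
set rp := g 4%N in hI h1' h2' h3' h4' h5' h6' h7' h8' h9' h10' h11'.
set rc := g 5%N in hm hI h1' h2' h3' h4' h5' h6' h7' h8' h9' h10' h11'.
set sp := g 6%N in hI h1' h2' h3' h4' h5' h6' h7' h8' h9' h10' h11'.
set sc := g 7%N in hI h1' h2' h3' h4' h5' h6' h7' h8' h9' h10' h11'.
have hp0 : 0 < p%:Z by rewrite ltz_nat prime_gt0.
have [e1 e2] := em_rn hp hNp hI.
have ha := em_a hp hNp hI.
have [s1 s2] := em_sn hp hNp hI.
set a := (rp %/ rc)%Z in e1 e2 ha s1 s2.
set sn := sp - a * sc in s1 s2.
set rn := rp - a * rc in e1 e2.
have hpow : (2 ^ j)%N%:Z <= 4 * N ^+ 2.
  apply: le_trans h11' _. have : 0 <= `|sp| by []. clear -h9' h10'. nia.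
have har : a * rc <= rp by clear -e2; rewrite /rn in e2; lia.
have hap : a <= p%:Z by clear -har h1' h3' ha; nia.
have ba : `|a| <= B by apply: bndp; clear -hap ha; lia.
have hasc : `|a * sc| <= p%:Z * p%:Z.
  rewrite normrM. apply: ler_pM => //; clear -hap ha h10' hNp; lia.
have bas : `|a * sc| <= B by apply: bndpp.
have bsn : `|sn| <= B.
  apply: bnd3. rewrite s1. have hp2 : 2 <= p%:Z by rewrite lez_nat prime_gt1.
  have ea : `|a * sc| = a * `|sc| by rewrite normrM ger0_norm //; clear -ha; lia.
  have : a * `|sc| <= p%:Z * p%:Z by rewrite -ea.
  clear -h9' h10' hNp hp2. nia.
have hrcp : rc <= p%:Z by clear -h2' h3'; lia.
have barc : `|a * rc| <= B by apply: bndp; clear -har ha h1' h3'; nia.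
have brn : `|rn| <= B by apply: bndp; clear -e2 hrcp; lia.
have bsc : `|sc| <= B by apply: bndp; clear -h10' hNp; lia.
have brc : `|rc| <= B by apply: bndp; clear -h1' hrcp; lia.
case: (ltrP N sn) => hx1.
  exists 0%N, 4%N. eexists. split; first done. split.
    sA; try exact: ba.
    sA; try exact: bas.
    sA; try exact: bsn.
    sT; try by rewrite h1.
    exact: reach0.
  rewrite /upd /= addn0. do 3!split => //. split; last done.
  have hx : N < `|sn| by clear -hx1 hN2; lia.
  exact: (em_exit hp hNp hI hx).
case: (ltrP sn (- N)) => hx2.
  exists 0%N, 5%N. eexists. split; first done. split.
    sA; try exact: ba.
    sA; try exact: bas.
    sA; try exact: bsn.
    sF; try by rewrite h1.
    sT; try by rewrite h12.
    exact: reach0.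
  rewrite /upd /= addn0. do 3!split => //. split; last done.
  have hx : N < `|sn| by clear -hx2 hN2; lia.
  exact: (em_exit hp hNp hI hx).
have [g1 [hr1 [g0 [g1' [g3 [g9 [g12 [g4 [g5 [g6 g7]]]]]]]]]] :
  exists g1, reach T B 12 (10%N, g) (10%N, g1) /\ g1 0%N = p%:Z /\ g1 1%N = N /\ g1 3%N = u%:Z /\ g1 9%N = 0 /\ g1 12%N = - N /\ g1 4%N = rc /\ g1 5%N = rn /\ g1 6%N = sc /\ g1 7%N = sn.
  eexists; split.
    sA; try exact: ba.
    sA; try exact: bas.
    sA; try exact: bsn.
    sF; try by rewrite h1.
    sF; try by rewrite h12.
    sA; try exact: barc.
    sA; try exact: brn.
    sA; try by rewrite h9 addr0.
    sA; try by rewrite h9 addr0.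
    sA; try by rewrite h9 addr0.
    sA; try by rewrite h9 addr0 -/sn.
    sJ. exact: reach0.
  rewrite /upd /= !h9 !addr0. done.
have hsnN : `|sn| <= N by clear -hx1 hx2; lia.
have hI1 : EInv p N u j.+1 (g1 4%N) (g1 5%N) (g1 6%N) (g1 7%N).
  rewrite g4 g5 g6 g7. exact: (em_cont hp hNp hI hsnN).
have hm1 : (`|g1 5%N|%N < m)%N by rewrite g5; clear -hm e2; lia.
have [i [k [g' [hk [hre rest]]]]] := IH j.+1 g1 hm1 g0 g1' g3 g9 g12 hI1.
exists i.+1, (12 + k)%N, g'. split; first by clear -hk; lia.
split; first exact: reach_trans hr1 hre.
by rewrite -addSnnS.
Qed.
End Euc.

Section Fin.
Variables (R : realType) (p : nat) (z : R) (u : nat).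
Hypothesis hp : prime p.
Hypothesis hz : 2 <= z.
Hypothesis hp2 : (2 < p)%N.
Hypothesis hu : (0 < u < p)%N.
Let N := Num.floor z.
Let K := Num.floor (p%:R / z).
Hypothesis hNK : N <= K.
Notation T := (tables p z).
Arguments tables : simpl never.
Let B := (p ^ 100)%N%:Z.

Lemma hNp : N < p%:Z.
Proof. apply: le_lt_trans hNK _. by apply: K_ltp => //; apply: prime_gt1. Qed.

Lemma tabQ (a : int) : 0 <= a -> a <= K -> T TQ a = (fq p `|a|%N)%:Z.
Proof. by move=> h0 h1; rewrite /T /tables h0 /= (le_K h1). Qed.

Lemma final_block g : g 0%N = p%:Z -> g 3%N = u%:Z -> g 9%N = 0 -> EFin p N u%:Z (g 5%N) (g 7%N) ->
  exists k, (k <= 14)%N /\ run Prog T B k (22%N, g) = Done (fq p u)%:Z.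
Proof.
move=> h0 h3 h9 [hw0 [hwN [hs0 [hsN hdv]]]].
have hN2 : 2 <= N by apply: N_ge2.
have hNp' := hNp.
have hp0 : 0 < p%:Z by rewrite ltz_nat prime_gt0.
have [w hw] : exists w : nat, g 5%N = w%:Z by exists `|g 5%N|%N; rewrite gez0_abs //; lia.
rewrite hw in hw0 hwN hdv.
set s := g 7%N in hs0 hsN hdv.
have hw3 : w%:Z * 3 <= w%:Z * (N+1) by rewrite ler_pM2l //; clear -hN2; lia.
have hwp : (0 < w < p)%N by clear -hw0 hwN hw3; lia.
have [g2 [k2 [hk2 [hr2 [g20 [g23 [g25 [g27 g216]]]]]]]] :
  exists g2 k2, (k2 <= 3)%N /\ reach T B k2 (22%N, g) (25%N, g2) /\ g2 0%N = p%:Z /\ g2 3%N = u%:Z /\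
    g2 5%N = w%:Z /\ g2 7%N = s /\ g2 16%N = `|s|.
  have bs : `|s| <= B by apply: bndp => //; clear -hsN hNp'; lia.
  case: (ltrP 0 s) => hs.
    eexists; exists 2%N; split; first done; split.
      sA. rewrite h9 addr0. exact: bs.
      sT; first by rewrite h9; exact: hs.
      exact: reach0.
    rewrite /upd /= h9 addr0 gtr0_norm //.
  eexists; exists 3%N; split; first done; split.
    sA; try by rewrite h9 addr0.
    sF; try by rewrite h9.
    sA; try by rewrite h9 sub0r normrN.
    exact: reach0.
  rewrite /upd /= h9 sub0r ler0_norm //.
have hws : (w%:Z)%:~R <= p%:R / z :> R by apply: w_small => //.
have hcw : coprime w p by rewrite coprime_sym prime_coprime //; apply/negP => /dvdn_leq; clear -hwp; lia.
have tq1 : T TQ w%:Z = (fq p w)%:Z by rewrite /T /tables /= hws.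
have ti1 : T TInvP w%:Z = (invmod p w)%:Z.
  rewrite /T /tables /= hws /=. have -> : (1 <= w%:Z) by clear -hwp; lia. by rewrite hcw.
have tq2 : T TQ `|s| = (fq p `|s|%N)%:Z.
  rewrite tabQ //.
  clear -hsN hNK; lia.
have hndw : ~~ (p %| w)%N by apply/negP => /dvdn_leq; clear -hwp; lia.
have [_ hiw] := invmod_spec hp hndw.
set t := ((u%:Z * s - w%:Z) %/ p%:Z)%Z.
have ht : t * p%:Z = u%:Z * s - w%:Z by rewrite /t divzK.
have hp3 : p%:Z * p%:Z + 3 * p%:Z <= p%:Z * p%:Z * p%:Z by clear -hp2; nia.
have hus : `|u%:Z * s| <= p%:Z * p%:Z.
  rewrite normrM. apply: ler_pM => //; clear -hu hsN hNp'; lia.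
have b1 : `|u%:Z * s| <= B by apply: bndpp.
have husw : `|u%:Z * s - w%:Z| <= p%:Z * p%:Z + p%:Z by clear -hus hwp; lia.
have b2 : `|u%:Z * s - w%:Z| <= B by apply: bnd3 => //; clear -husw hp3; lia.
have htb : `|t| <= p%:Z + 1.
  have e : `|t| * p%:Z = `|u%:Z * s - w%:Z| by rewrite -ht normrM (ger0_norm (ltW hp0)).
  clear -e husw hp0. nia.
have b3 : `|t| <= B by apply: bnd3 => //; clear -htb hp3 hp2; lia.
have hti : `|t * (invmod p w)%:Z| <= (p%:Z + 1) * p%:Z.
  rewrite normrM. apply: ler_pM => //; clear -hiw; lia.
have b4 : `|t * (invmod p w)%:Z| <= B by apply: bnd3 => //; clear -hti hp3; lia.
have hqw := fq_lt hp w. have hqs := fq_lt hp `|s|%N.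
have b5 : `|(fq p w)%:Z - t * (invmod p w)%:Z| <= B by apply: bnd3 => //; clear -hti hp3 hqw; lia.
have b6 : `|(fq p w)%:Z - t * (invmod p w)%:Z - (fq p `|s|%N)%:Z| <= B.
  by apply: bnd3 => //; clear -hti hp3 hqw hqs; lia.
have b7 : `|(((fq p w)%:Z - t * (invmod p w)%:Z - (fq p `|s|%N)%:Z) %% p%:Z)%Z| <= B.
  apply: bndp => //. have := modz_ge0 ((fq p w)%:Z - t * (invmod p w)%:Z - (fq p `|s|%N)%:Z) (_ : p%:Z != 0).
  have := ltz_pmod ((fq p w)%:Z - t * (invmod p w)%:Z - (fq p `|s|%N)%:Z) hp0. clear -hp0. lia.
have [g3 [hr3 g321]] : exists g3, reach T B 10 (25%N, g2) (35%N, g3) /\ g3 21%N = ((((fq p w)%:Z - t * (invmod p w)%:Z - (fq p `|s|%N)%:Z) %% p%:Z)%Z).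
  eexists; split.
    sL. sL. sL.
    do 7!(sA; try by rewrite ?g20 ?g23 ?g25 ?g27 ?g216 ?tq1 ?ti1 ?tq2).
  unfold upd; simpl; by rewrite g20 g23 g25 g27 g216 ?tq1 ?ti1 ?tq2.
exists (k2 + 10).+1. split; first by clear -hk2; lia.
rewrite (reach_done (reach_trans hr2 hr3) (@st_halt T B 35%N g3 21%N erefl erefl)) g321.
congr Done. by rewrite (M2 hp hp2 hu hwp hs0 _ hdv) //; clear -hsN hNp'; lia.
Qed.
End Fin.

Lemma count_log (n0 i : nat) : (2 <= n0)%N -> (2 ^ i <= 4 * n0 * n0)%N ->
  (i <= 2 * trunc_log 2 n0 + 3)%N.
Proof.
move=> h2 hi. have hl : (n0 < 2 ^ (trunc_log 2 n0).+1)%N by apply: trunc_log_ltn.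
move: hl; move: (trunc_log 2 n0) => t hl.
rewrite leqNgt; apply/negP => hlt.
have : (2 ^ (2 * t + 4) <= 2 ^ i)%N by apply: leq_pexp2l => //; clear -hlt; lia.
have e : (2 ^ (2 * t + 4) = 2 ^ 2 * 2 ^ t.+1 * 2 ^ t.+1)%N.
  by rewrite -!expnD; congr (2 ^ _)%N; lia.
rewrite e. have : (n0 * n0 < 2 ^ t.+1 * 2 ^ t.+1)%N by apply: ltn_mul.
clear -hi. nia.
Qed.

Section Main.
Variables (R : realType) (p : nat) (z : R) (u : nat).
Hypothesis hp : prime p.
Hypothesis hz : 2 <= z.
Hypothesis hu : (u < p.-1)%N.
Notation T := (tables p z).
Arguments tables : simpl never.
Let B := (p ^ 100)%N%:Z.

Lemma main : exists n, (n <= 100 * trunc_log 2 `|Num.floor z|%N)%N /\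
  run Prog T B n (0%N, init p z u) = Done (fq p u)%:Z.
Proof.
set N := Num.floor z. set K := Num.floor (p%:R / z).
have hN2 : 2 <= N by apply: N_ge2.
have hp1 := prime_gt1 hp.
set n0 := `|N|%N. have hn0 : N = n0%:Z by rewrite /n0 gez0_abs //; clear -hN2; lia.
have hn02 : (2 <= n0)%N by clear -hN2 hn0; lia.
have htl : (0 < trunc_log 2 n0)%N by rewrite trunc_log_gt0 /=; clear -hn02; lia.
have [g0 [hr0 [g00 [g01 [g02 [g03 [g09 [g010 g011]]]]]]]] : exists g0, reach T B 3 (0%N, init p z u) (3%N, g0) /\
   g0 0%N = p%:Z /\ g0 1%N = N /\ g0 2%N = K /\ g0 3%N = u%:Z /\ g0 9%N = 0 /\ g0 10%N = 1 /\ g0 11%N = 2.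
  eexists; split.
    sC. sC. sC. exact: reach0.
  by rewrite /upd /init /=.
case: (posnP u) => [u0 | upos].
  exists 5%N. split; first by clear -htl; lia.
  have hr : reach T B 4 (0%N, init p z u) (36%N, g0).
    apply: (reach_trans hr0 (k2 := 1%N)). sT; first by rewrite g03 g010 u0.
    exact: reach0.
  rewrite (reach_done hr (@st_halt T B 36%N g0 9%N erefl erefl)) g09 u0.
  by rewrite /fq dvdn0.
have hp2 : (2 < p)%N by clear -hu upos; lia.
have hup : (0 < u < p)%N by clear -hu upos; lia.
have hNp1 : N < p%:Z -> N <= p%:Z by move=> h; apply: ltW.
case: (ltrP K N) => hKN.
  have hpb : p%:Z < N * (N + 1) := exp_big hp1 hz hKN.
  have hpn : (p < n0 * n0.+1)%N by move: hpb; rewrite hn0; clear; lia.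
  have [g1 [hr1 [g10 [g19 [g110 [g111 [g122 [g123 [g124 g125]]]]]]]]] :
    exists g1, reach T B 9 (0%N, init p z u) (41%N, g1) /\ g1 0%N = p%:Z /\ g1 9%N = 0 /\ g1 10%N = 1 /\ g1 11%N = 2 /\ g1 22%N = (p * p)%N%:Z /\ g1 23%N = 1%N%:Z /\ g1 24%N = u%:Z /\ g1 25%N = (p.-1)%N%:Z.
    eexists; split.
      apply: (reach_trans hr0 (k2 := 6%N)).
      sF; first by rewrite g03 g010; clear -upos; lia.
      sT; first by rewrite g02 g01.
      sA; try by rewrite g00; apply: bndpp => //; rewrite normrM ger0_norm.
      sC.
      sA; try by rewrite g03 g09 addr0; apply: bndp => //; rewrite ger0_norm //; clear -hup; lia.
      sA; try by rewrite g00 g010; apply: bndp => //; clear -hp1; lia.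
      exact: reach0.
    rewrite /upd /= g00 g09 g010 g011 g03 addr0. do 7!split => //.
    clear -hp1; lia.
  have hm0 : (1 * u ^ p.-1 = u ^ p.-1 %[mod p * p])%N by rewrite mul1n.
  have hpp1 : (1 < p * p)%N by clear -hp1; nia.
  have hupp : (u < p * p)%N by clear -hup hp1; nia.
  have hpl : (p.-1 < p)%N by clear -hp1; lia.
  have [i [k [res' [g' [hk [hi [hre [h0' [h10' [h23' [hr' hm']]]]]]]]]]] :=
    exp_loop T hp g10 g19 g110 g111 g122 g123 g124 g125 hpp1 hupp hpl hm0.
  have hv := M1 hp hup hr' hm'.
  have hfq := fq_lt hp u.
  have [g2 [hr2 g223]] : exists g2, reach T B 2 (51%N, g') (53%N, g2) /\ g2 23%N = (fq p u)%:Z.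
    eexists; split.
      sA; try by rewrite h23' h10'; apply: bndpp => //; clear -hr'; lia.
      sA; try by rewrite h23' h10' h0' hv; apply: bndp => //; clear -hfq; lia.
      exact: reach0.
    by rewrite /upd /= h23' h10' h0' hv.
  exists (9 + k + 2).+1. split.
    have h4 : (2 ^ i <= 4 * n0 * n0)%N by clear -hi hpn hn02; nia.
    have := count_log hn02 h4. clear -hk htl. nia.
  by rewrite (reach_done (reach_trans (reach_trans hr1 hre) hr2) (@st_halt T B 53%N g2 23%N erefl erefl)) g223.
have hNp' : N < p%:Z := hNp hp hz hKN.
have [g1 [hr1 [g10 [g11 [g13 [g19 [g112 [g14 [g15 [g16 g17]]]]]]]]]] :
  exists g1, reach T B 10 (0%N, init p z u) (10%N, g1) /\ g1 0%N = p%:Z /\ g1 1%N = N /\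
    g1 3%N = u%:Z /\ g1 9%N = 0 /\ g1 12%N = - N /\ g1 4%N = p%:Z /\ g1 5%N = u%:Z /\
    g1 6%N = 0 /\ g1 7%N = 1.
  eexists; split.
    apply: (reach_trans hr0 (k2 := 7%N)).
    sF; first by rewrite g03 g010; clear -upos; lia.
    sF; first by rewrite g02 g01.
    sA; try by rewrite g09 g01 sub0r normrN; apply: bndp => //; clear -hNp' hN2; lia.
    sA; try by rewrite g00 g09 addr0; apply: bndp => //; rewrite ger0_norm.
    sA; try by rewrite g03 g09 addr0; apply: bndp => //; rewrite ger0_norm //; clear -hup; lia.
    sC. sC.
    exact: reach0.
  by rewrite /upd /= g00 g09 g01 g03 !addr0 sub0r.
have hI : EInv p N u%:Z 0 (g1 4%N) (g1 5%N) (g1 6%N) (g1 7%N).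
  rewrite g14 g15 g16 g17 /EInv.
  do 2?split; try (clear -hup; lia).
  split; first done.
  split; first by apply/dvdzP; exists (-1); rewrite mulr0 sub0r mulN1r.
  split; first by rewrite mulr1 subrr dvdz0.
  split; first by rewrite normr1 normr0 mulr1 mulr0 addr0.
  split; first done.
  split; first by rewrite mul0r.
  split; first by rewrite normr0 normr1.
  split; first by rewrite normr1; clear -hN2; lia.
  by rewrite normr0 normr1 add0r expr1n.
have [i [k [g' [hk [hre [h0' [h3' [h9' [hEF hpow]]]]]]]]] :=
  euclid_loop T hp hNp' hN2 (ltnSn `|g1 5%N|%N) g10 g11 g13 g19 g112 hI.
have [k' [hk' hrun]] := final_block hp hz hp2 hup hKN h0' h3' h9' hEF.
exists (10 + k + k')%N. split.
  have h4 : (2 ^ i <= 4 * n0 * n0)%N.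
    move: hpow; rewrite add0n hn0; clear; rewrite -lez_nat !PoszM; lia.
  have := count_log hn02 h4. clear -hk hk' htl. nia.
by rewrite run_cat (reach_trans hr1 hre).
Qed.
End Main.

Theorem theorem7 :
  exists (P : seq instr) (C : nat),
  forall (R : realType) (p : nat) (z : R) (u : nat),
    prime p -> 2 <= z -> (u < p.-1)%N ->
    exists n : nat,
      (n <= C * trunc_log 2 `|Num.floor z|%N)%N /\
      run P (tables p z) (p ^ C)%:Z n (0%N, init p z u) = Done (fq p u)%:Z.
Proof.
exists Prog, 100%N. move=> R p z u hp hz hu. exact: main.
Qed.
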